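(* Let $n,q\ge1$ and $c\ge0$ be integers. If there exists a $PComS(n,q,-c)$, then there exists a partial Hadamard matrix $PH(n\times(nq+c))$.
   Context: $\mathbb{Z}_2^n$ is the set of sequences $X=(x_0,\dots,x_{n-1})$ with entries in $\{+1,-1\}$, indices mod $n$. The periodic autocorrelation is $\mathsf{P}_X(k)=\sum_{i=0}^{n-1}x_ix_{i+k}$; it depends only on the cyclic-shift class $X_C$. A $PComS(n,q,c)$ is a list (repetitions allowed) of $q$ cyclic-shift classes $A_{1C},\dots,A_{qC}$ with $A_i\in\mathbb{Z}_2^n$ such that $\sum_{i=1}^q\mathsf{P}_{A_i}(k)=c$ for all $1\le k\le n-1$. A partial Hadamard matrix $PH(k\times m)$ is a $k\times m$ matrix $H$ with all entries in $\{+1,-1\}$ satisfying $HH^{t}=mI_k$. *)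

(* Defs.v *)
From mathcomp Require Import all_boot all_algebra.
Set Implicit Arguments. Unset Strict Implicit. Unset Printing Implicit Defensive.
Import GRing.Theory Num.Theory.
Local Open Scope ring_scope.

Definition pm1_seq (n : nat) (X : seq int) : bool :=
  (size X == n) && all (fun x => (x == 1) || (x == -1)) X.

Definition paf (n : nat) (X : seq int) (k : nat) : int :=
  \sum_(i < n) X`_i * X`_((i + k) %% n).

(* PComS(n,q,c): a list of q sequences of Z_2^n (representatives of the
   cyclic-shift classes; P_X depends only on the class) whose periodic
   autocorrelations sum to c at every shift 1 <= k <= n-1. *)
Definition PComS (n q : nat) (c : int) (L : seq (seq int)) : Prop :=
  [/\ size L = q,
      all (pm1_seq n) L &
      forall k : nat, (1 <= k <= n - 1)%N -> \sum_(A <- L) paf n A k = c].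

Definition partial_hadamard (k m : nat) (H : 'M[int]_(k, m)) : Prop :=
  (forall i j, H i j = 1 \/ H i j = -1) /\ H *m H^T = (m%:R)%:M.

(* Main.v *)
Require Import Defs.
From mathcomp Require Import all_boot all_algebra.
From mathcomp Require Import zify.
Import GRing.Theory Num.Theory.
Local Open Scope ring_scope.

Lemma circ_paf (n : nat) (A : seq int) (i i' : nat) :
  (0 < n)%N -> (i < n)%N ->
  \sum_(t < n) A`_((i + t) %% n) * A`_((i' + t) %% n) =
  paf n A ((i' + (n - i)) %% n).
Proof.
move=> n0 ilt; rewrite /paf.
pose h := fun t : 'I_n => Ordinal (ltn_pmod (i + t) n0).
have hinj : injective h.
  move=> t t' /(congr1 val) /= /eqP.
  rewrite eqn_modDl !modn_small // => /eqP E; exact: val_inj.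
rewrite [RHS](reindex_inj hinj) /=; apply: eq_bigr => t _.
congr (_ * _); congr (A`_ _).
rewrite modnDm.
have -> : (i + t + (i' + (n - i)) = 1 * n + (i' + t))%N by lia.
by rewrite modnMDl.
Qed.
Theorem theorem20 (n q c : nat) :
  (1 <= n)%N -> (1 <= q)%N ->
  (exists L : seq (seq int), PComS n q (- (c%:Z)) L) ->
  exists H : 'M[int]_(n, n * q + c), partial_hadamard H.
Proof.
move=> n0 q1 [L [sL allL hL]].
pose F := fun (i : nat) (j : nat) => (nth [::] L (j %/ n))`_((i + j %% n) %% n).
have memA : forall a, (a < q)%N -> pm1_seq n (nth [::] L a).
  by move=> a aq; apply: (allP allL); apply: mem_nth; rewrite sL.
have entry : forall a x, (a < q)%N -> (x < n)%N ->
    (nth [::] L a)`_x = 1 \/ (nth [::] L a)`_x = -1.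
  move=> a x aq xn; have /andP[/eqP sA /allP aA] := memA a aq.
  have := aA _ (mem_nth 0 (_ : (x < size (nth [::] L a))%N)).
  by rewrite sA => /(_ xn) /orP [] /eqP ->; [left|right].
have sq1 : forall a x, (a < q)%N -> (x < n)%N ->
    (nth [::] L a)`_x * (nth [::] L a)`_x = 1.
  by move=> a x aq xn; case: (entry a x aq xn) => ->.
have inner : forall (i i' : 'I_n) a, (a < q)%N ->
  \sum_(a * n <= j < a.+1 * n) F i j * F i' j =
  \sum_(t < n) (nth [::] L a)`_((i + t) %% n) * (nth [::] L a)`_((i' + t) %% n).
  move=> i i' a aq.
  rewrite -{1}[(a * n)%N]add0n big_addn mulSn addnK big_mkord.
  apply: eq_bigr => t _; rewrite /F.
  have -> : ((t + a * n) %/ n = a)%N.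
    by rewrite addnC divnMDl // divn_small // addn0.
  have -> : ((t + a * n) %% n = t)%N.
    by rewrite addnC modnMDl modn_small.
  by [].
exists (\matrix_(i, j) match split j with inl j' => F i j' | inr _ => 1 end).
split.
  move=> i j; rewrite mxE; case: (split j) => [j'|_]; last by left.
  apply: entry; last by rewrite ltn_pmod.
  by rewrite ltn_divLR // [(q * n)%N]mulnC.
apply/matrixP => i i'; rewrite !mxE.
under eq_bigr => j _ do rewrite !mxE.
rewrite big_split_ord /=.
have sl : forall j : 'I_(n * q), split (lshift c j) = inl j.
  by move=> j; exact: (unsplitK (inl j)).
have sr : forall j : 'I_c, split (rshift (n * q) j) = inr j.
  by move=> j; exact: (unsplitK (inr j)).
under eq_bigr => j _ do rewrite sl.
under [X in _ + X = _]eq_bigr => j _ do rewrite sr mulr1.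
rewrite sumr_const card_ord.
rewrite -(big_mkord xpredT (fun j => F i j * F i' j)) mulnC big_nat_mul.
rewrite big_mkord.
under eq_bigr => a _ do rewrite (inner i i' a (ltn_ord a)).
have [<-|ne] := eqVneq i i'.
  under eq_bigr => a _ do (under eq_bigr => t _ do rewrite (sq1 a _ (ltn_ord a) (ltn_pmod _ n0))).
  rewrite mulr1n.
  under eq_bigr => a _ do rewrite sumr_const card_ord.
  rewrite sumr_const card_ord -mulrnA natrD.
  by rewrite [(n * q)%N]mulnC.
under eq_bigr => a _ do rewrite (circ_paf _ _ _ i' n0 (ltn_ord i)).
have kr : (1 <= (i' + (n - i)) %% n <= n - 1)%N.
  have hi := ltn_ord i; have hi' := ltn_ord i'.
  have ne' : (nat_of_ord i != nat_of_ord i') by [].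
  case: (ltnP i' i) => h.
    rewrite modn_small; last by lia.
    by apply/andP; split; lia.
  have -> : (i' + (n - i) = 1 * n + (i' - i))%N by lia.
  rewrite modnMDl modn_small; last by lia.
  have : (i < i')%N by rewrite ltn_neqAle ne' h.
  by move=> ?; apply/andP; split; lia.
have := hL _ kr; rewrite (big_nth [::]) sL big_mkord => ->.
rewrite mulr0n.
by rewrite natz addNr.
Qed.
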